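(* Let $M$ be a matching of size $k$ and let $N$ be a matching of size $k+2$ having a block $K$ such that $N-K$ equals $M$ up to cyclic relabeling. Then the degree of $N$ in $\mathbf{DCM}_{k+2}$ equals the degree of $M$ in $\mathbf{DCM}_k$.
   Context: Let $k\ge 1$ and let $X_{2k}=\{P_1,\dots,P_{2k}\}$ be $2k$ points in convex position in the plane, labeled in clockwise cyclic order; indices are taken modulo $2k$. A matching of $X_{2k}$ means a set of $k$ pairwise non-crossing straight segments (edges) with endpoints in $X_{2k}$ covering every point exactly once; its size is $k$. Two matchings $M,M'$ of $X_{2k}$ are disjoint compatible if they have no common edge and no edge of $M$ crosses an edge of $M'$. $\mathbf{DCM}_k$ is the graph whose vertices are the matchings of $X_{2k}$, two being adjacent iff they are disjoint compatible; the degree of a vertex of $\mathbf{DCM}_k$ is invariant under cyclic relabeling of the points. A block of a matching $M$ is a pair of edges $\{P_iP_{i+3},P_{i+1}P_{i+2}\}\subseteq M$; an antiblock is a pair of edges $\{P_iP_{i+1},P_{i+2}P_{i+3}\}\subseteq M$; a separated pair is a block or an antiblock. If $K$ is a separated pair of a matching $N$ of size $k+2$, then $N-K$ denotes the set $N\setminus K$, regarded as a matching of the remaining $2k$ points (which are in convex position) with their inherited cyclic order, i.e. as a matching of size $k$ defined up to cyclic relabeling. *)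

(* Defs.v *)
(* Points P_1..P_n in convex position, clockwise, are
   modelled by 'I_n (label j <-> P_{j+1}); edges are 2-element subsets. *)
From mathcomp Require Import all_boot.
Set Implicit Arguments. Unset Strict Implicit. Unset Printing Implicit Defensive.

(* Two chords of a convex polygon cross iff their four endpoints are distinct
   and interleave in the cyclic (= label) order. *)
Definition crossing (n : nat) (e f : {set 'I_n}) : bool :=
  [exists a : 'I_n, exists b : 'I_n, exists c : 'I_n, exists d : 'I_n,
    [&& e == [set a; b], f == [set c; d] &
        ((a < c < b) && (b < d)) || ((c < a < d) && (d < b))]].

Definition is_matching (n : nat) (M : {set {set 'I_n}}) : bool :=
  [&& [forall e in M, #|e| == 2],
      [forall x : 'I_n, #|[set e in M | x \in e]| == 1] &
      [forall e in M, forall f in M, ~~ crossing e f]].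

Definition dcompat (n : nat) (M M' : {set {set 'I_n}}) : bool :=
  [disjoint M & M'] && [forall e in M, forall f in M', ~~ crossing e f].

Definition degree (n : nat) (M : {set {set 'I_n}}) : nat :=
  #|[set M' : {set {set 'I_n}} | is_matching M' && dcompat M M']|.

Definition pt (n : nat) (j : nat) : 'I_n.+1 := inord (j %% n.+1).

Definition has_block_at (k : nat) (N : {set {set 'I_(k.*2).+4}}) (i : nat) : bool :=
  ([set pt _ i; pt _ (i + 3)] \in N) && ([set pt _ (i + 1); pt _ (i + 2)] \in N).

(* N - K (K the block at i), with the remaining 2k points i+4, i+5, ..., i-1
   in inherited cyclic order, equals M after the cyclic relabeling by r. *)
Definition removal_is_rot (k : nat) (N : {set {set 'I_(k.*2).+4}})
    (M : {set {set 'I_(k.*2)}}) (i r : nat) : Prop :=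
  forall a b : 'I_(k.*2),
    ([set a; b] \in M) =
    ([set pt _ (i + 4 + ((a + r) %% k.*2)); pt _ (i + 4 + ((b + r) %% k.*2))] \in N).

(* Main.v *)
Require Import Defs.
From mathcomp Require Import all_boot.
From mathcomp Require Import zify.
Set Implicit Arguments. Unset Strict Implicit. Unset Printing Implicit Defensive.

Definition PP (a b c d : nat) := ((a < c < b) && (b < d)) || ((c < a < d) && (d < b)).
Definition cr a b c d := [|| PP a b c d, PP b a c d, PP a b d c | PP b a d c].

Lemma disjE (T : finType) (A B : {set T}) x :
  [disjoint A & B] -> x \in A -> x \in B -> False.
Proof.
rewrite -setI_eq0 => /eqP/setP/(_ x); rewrite !inE => H hA hB.
by rewrite hA hB in H.
Qed.

Lemma disjI (T : finType) (A B : {set T}) :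
  (forall x, x \in A -> x \in B -> False) -> [disjoint A & B].
Proof.
move=> H; rewrite -setI_eq0; apply/eqP/setP => x; rewrite !inE.
case hA: (x \in A); case hB: (x \in B) => //; by case: (H x).
Qed.

Lemma set2_eq (T : finType) (a b c d : T) :
  [set a; b] = [set c; d] -> (a = c /\ b = d) \/ (a = d /\ b = c).
Proof.
move=> E.
have ha : a \in [set c; d] by rewrite -E !inE eqxx.
have hb : b \in [set c; d] by rewrite -E !inE eqxx orbT.
have hc : c \in [set a; b] by rewrite E !inE eqxx.
have hd : d \in [set a; b] by rewrite E !inE eqxx orbT.
move: ha hb hc hd; rewrite !inE.
by move=> /orP[]/eqP ? /orP[]/eqP ? /orP[]/eqP ? /orP[]/eqP ?; subst; auto.
Qed.


Lemma cr_s1 a b c d : cr a b c d = cr b a c d.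
Proof. rewrite /cr; by case: (PP a b c d); case: (PP b a c d); case: (PP a b d c); case: (PP b a d c). Qed.
Lemma cr_s2 a b c d : cr a b c d = cr a b d c.
Proof. rewrite /cr; by case: (PP a b c d); case: (PP b a c d); case: (PP a b d c); case: (PP b a d c). Qed.
Lemma cr_s3 a b c d : cr a b c d = cr c d a b.
Proof. rewrite /cr /PP. lia. Qed.
Lemma crQ a b c d : a < c < b -> b < d -> cr a b c d.
Proof. by move=> h1 h2; rewrite /cr /PP h1 h2. Qed.

Lemma crossingE n (a b c d : 'I_n) :
  crossing [set a; b] [set c; d] = cr a b c d.
Proof.
apply/idP/idP.
- case/existsP=> a' /existsP [b' /existsP [c' /existsP [d' /and3P [/eqP e1 /eqP e2 h]]]].
  have {h} : PP a' b' c' d' := h.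
  case: (set2_eq e1) => [[-> ->]|[-> ->]]; case: (set2_eq e2) => [[-> ->]|[-> ->]] => h;
  by rewrite /cr h ?orbT.
- have K : forall a' b' c' d' : 'I_n, [set a; b] = [set a'; b'] -> [set c; d] = [set c'; d'] ->
     PP a' b' c' d' -> crossing [set a; b] [set c; d].
    move=> a' b' c' d' e1 e2 h; apply/existsP; exists a'; apply/existsP; exists b';
    apply/existsP; exists c'; apply/existsP; exists d'; by rewrite e1 e2 !eqxx.
  case/or4P=> h.
  + exact: (K a b c d).
  + by apply: (K b a c d) => //; rewrite setUC.
  + by apply: (K a b d c) => //; rewrite setUC.
  + by apply: (K b a d c) => //; rewrite setUC.
Qed.

Definition r1 M y := y.+1 %% M.

Lemma r1E M y : y < M -> r1 M y = if y.+1 < M then y.+1 else 0.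
Proof.
move=> h; rewrite /r1; case: ifP => h2; first by rewrite modn_small.
have -> : y.+1 = M by lia.
by rewrite modnn.
Qed.

Lemma step_core M a b c d : a < c < b -> b < d -> d < M ->
  cr (r1 M a) (r1 M b) (r1 M c) (r1 M d).
Proof.
move=> h1 h2 h3.
have ea : a.+1 < M by lia. have eb : b.+1 < M by lia. have ec : c.+1 < M by lia.
rewrite (r1E (_ : a < M)) ?ea; last lia.
rewrite (r1E (_ : b < M)) ?eb; last lia.
rewrite (r1E (_ : c < M)) ?ec; last lia.
rewrite (r1E h3); case: ifP => hd.
- apply: crQ; lia.
- rewrite cr_s2 cr_s3; apply: crQ; lia.
Qed.

Lemma step M a b c d : a < M -> b < M -> c < M -> d < M -> cr a b c d ->
  cr (r1 M a) (r1 M b) (r1 M c) (r1 M d).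
Proof.
move=> ha hb hc hd; rewrite [cr a b c d]/cr /PP.
case/or4P => /orP [] /andP [] /andP [h1 h2] h3.
- apply: step_core => //; lia.
- rewrite cr_s3; apply: step_core => //; lia.
- rewrite cr_s1; apply: step_core => //; lia.
- rewrite cr_s1 cr_s3; apply: step_core => //; lia.
- rewrite cr_s2; apply: step_core => //; lia.
- rewrite cr_s2 cr_s3; apply: step_core => //; lia.
- rewrite cr_s1 cr_s2; apply: step_core => //; lia.
- rewrite cr_s1 cr_s2 cr_s3; apply: step_core => //; lia.
Qed.

Lemma cr_rot_imp M t a b c d : a < M -> b < M -> c < M -> d < M -> cr a b c d ->
  cr ((a + t) %% M) ((b + t) %% M) ((c + t) %% M) ((d + t) %% M).
Proof.
move=> ha hb hc hd h; have hM : 0 < M by lia.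
elim: t => [|t IH]; first by rewrite !addn0 !modn_small.
have E : forall y, (y + t.+1) %% M = r1 M ((y + t) %% M).
  by move=> y; rewrite /r1 -[((y + t) %% M).+1]addn1 modnDml addn1 addnS.
rewrite !E; apply: step => //; exact: ltn_pmod.
Qed.

Lemma cr_rot M t y1 y2 y3 y4 : y1 < M -> y2 < M -> y3 < M -> y4 < M ->
  cr ((y1 + t) %% M) ((y2 + t) %% M) ((y3 + t) %% M) ((y4 + t) %% M) = cr y1 y2 y3 y4.
Proof.
move=> h1 h2 h3 h4; have hM : 0 < M by lia.
apply/idP/idP; last exact: cr_rot_imp.
move/(cr_rot_imp (M - t %% M) (ltn_pmod _ hM) (ltn_pmod _ hM) (ltn_pmod _ hM) (ltn_pmod _ hM)).
have E : forall y, y < M -> ((y + t) %% M + (M - t %% M)) %% M = y.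
  move=> y hy; rewrite modnDml {1}(divn_eq t M).
  have ht := ltn_pmod t hM.
  have -> : y + (t %/ M * M + t %% M) + (M - t %% M) = (t %/ M).+1 * M + y.
    rewrite mulSn; lia.
  by rewrite modnMDl modn_small.
by rewrite !E.
Qed.

Lemma cr_shift s y1 y2 y3 y4 : cr (s + y1) (s + y2) (s + y3) (s + y4) = cr y1 y2 y3 y4.
Proof. rewrite /cr /PP; lia. Qed.

Definition rho (p i y : nat) : 'I_p.+1 := pt p (i + y).

Lemma val_rho p i y : (rho p i y : nat) = (i + y) %% p.+1.
Proof. by rewrite /rho /pt inordK // ltn_pmod. Qed.

Lemma rho_eq p i y1 y2 : y1 < p.+1 -> y2 < p.+1 -> (rho p i y1 == rho p i y2) = (y1 == y2).
Proof.
move=> h1 h2; apply/idP/idP => [/eqP/(congr1 (@nat_of_ord _))|/eqP -> //].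
rewrite !val_rho => /eqP; rewrite eqn_modDl !modn_small //.
Qed.

Lemma rho_onto p i (x : 'I_p.+1) : exists2 y, y < p.+1 & x = rho p i y.
Proof.
have inj : injective (fun y : 'I_p.+1 => rho p i y).
  by move=> y1 y2 /eqP; rewrite rho_eq // => /eqP /val_inj.
exists (invF inj x) => //; by rewrite (f_invF inj x).
Qed.

Lemma cr_rho p i y1 y2 y3 y4 : y1 < p.+1 -> y2 < p.+1 -> y3 < p.+1 -> y4 < p.+1 ->
  cr (rho p i y1) (rho p i y2) (rho p i y3) (rho p i y4) = cr y1 y2 y3 y4.
Proof.
move=> h1 h2 h3 h4; rewrite !val_rho !(addnC i) cr_rot //.
Qed.

Lemma m_size n (S : {set {set 'I_n}}) e : is_matching S -> e \in S ->
  exists a b, a != b /\ e = [set a; b].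
Proof. by case/and3P => /forall_inP H _ _ /H /cards2P. Qed.

Lemma m_one n (S : {set {set 'I_n}}) x : is_matching S ->
  exists e0, [set e in S | x \in e] = [set e0].
Proof. by case/and3P => _ /forallP/(_ x)/cards1P. Qed.

Lemma m_ex n (S : {set {set 'I_n}}) x : is_matching S -> exists2 e, e \in S & x \in e.
Proof.
move=> /(m_one x) [e0 E].
have : e0 \in [set e in S | x \in e] by rewrite E inE.
by rewrite inE => /andP [h1 h2]; exists e0.
Qed.

Lemma m_uniq n (S : {set {set 'I_n}}) x e f : is_matching S -> e \in S -> f \in S ->
  x \in e -> x \in f -> e = f.
Proof.
move=> /(m_one x) [e0 E] he hf hxe hxf.
have : e \in [set e in S | x \in e] by rewrite inE he hxe.
have : f \in [set e in S | x \in e] by rewrite inE hf hxf.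
by rewrite E !inE => /eqP -> /eqP ->.
Qed.

Lemma m_nc n (S : {set {set 'I_n}}) e f : is_matching S -> e \in S -> f \in S ->
  crossing e f = false.
Proof.
by case/and3P => _ _ /forall_inP H /H /forall_inP H2 /H2 /negbTE.
Qed.

Lemma m_mk n (S : {set {set 'I_n}}) :
  (forall e, e \in S -> #|e| == 2) ->
  (forall x, exists2 e, e \in S & x \in e) ->
  (forall x e f, e \in S -> f \in S -> x \in e -> x \in f -> e = f) ->
  (forall e f, e \in S -> f \in S -> crossing e f = false) ->
  is_matching S.
Proof.
move=> H1 H2 H3 H4; apply/and3P; split.
- by apply/forall_inP.
- apply/forallP => x; apply/cards1P; case: (H2 x) => e he hx; exists e.
  apply/setP => f; rewrite !inE; apply/idP/idP.
  + by case/andP => hf hxf; rewrite (H3 x f e).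
  + by move/eqP ->; rewrite he hx.
- apply/forall_inP => e he; apply/forall_inP => f hf; by rewrite H4.
Qed.

Lemma edge_other n (e : {set 'I_n}) x : #|e| == 2 -> x \in e ->
  exists2 y, y != x & e = [set x; y].
Proof.
case/cards2P => a [b [hab ->]]; rewrite !inE => /orP [] /eqP ->.
- by exists b => //; rewrite eq_sym.
- by exists a => //; rewrite setUC.
Qed.

Lemma dc_disj n (A B : {set {set 'I_n}}) e : dcompat A B -> e \in A -> e \in B -> False.
Proof. case/andP => H _; exact: disjE. Qed.

Lemma dc_nc n (A B : {set {set 'I_n}}) e f : dcompat A B -> e \in A -> f \in B ->
  crossing e f = false.
Proof. by case/andP => _ /forall_inP H /H /forall_inP H2 /H2 /negbTE. Qed.

Lemma dc_mk n (A B : {set {set 'I_n}}) :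
  (forall e, e \in A -> e \in B -> False) ->
  (forall e f, e \in A -> f \in B -> crossing e f = false) -> dcompat A B.
Proof.
move=> H1 H2; apply/andP; split; first exact: disjI.
apply/forall_inP => e he; apply/forall_inP => f hf; by rewrite H2.
Qed.

Definition phi n i r (a : 'I_n) : 'I_n.+4 := rho n.+3 i (4 + (a + r) %% n).

Lemma ord_pos n (a : 'I_n) : 0 < n.
Proof. by case: n a => [[]|]. Qed.

Lemma phi_lt n r (a : 'I_n) : 4 + (a + r) %% n < n.+4.
Proof. have := ltn_pmod (a + r) (ord_pos a); lia. Qed.

Lemma phi_eq n i r (a b : 'I_n) : (phi i r a == phi i r b) = (a == b).
Proof.
rewrite /phi rho_eq ?phi_lt // eqn_add2l.
apply/idP/idP => [|/eqP -> //].
by rewrite eqn_modDr !modn_small // => /eqP /val_inj ->.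
Qed.

Lemma phi_inj n i r : injective (@phi n i r).
Proof. by move=> a b /eqP; rewrite phi_eq => /eqP. Qed.

Lemma rho_phi n i r j (a : 'I_n) : j < 4 -> (rho n.+3 i j == phi i r a) = false.
Proof. move=> hj; rewrite /phi rho_eq ?phi_lt //; lia. Qed.

Lemma pt_cases n i r (n0 : 0 < n) (x : 'I_n.+4) :
  (exists2 j, j < 4 & x = rho n.+3 i j) \/ exists a : 'I_n, x = phi i r a.
Proof.
case: (rho_onto i x) => y hy ->.
case: (ltnP y 4) => hy4; first by left; exists y.
right; set z := y - 4.
have hz : z < n by rewrite /z; lia.
have ha : (z + (n - r %% n)) %% n < n by apply: ltn_pmod.
exists (Ordinal ha); rewrite /phi /=.
have -> : ((z + (n - r %% n)) %% n + r) %% n = z.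
  rewrite modnDml {2}(divn_eq r n).
  have hr := ltn_pmod r n0.
  have -> : z + (n - r %% n) + (r %/ n * n + r %% n) = (r %/ n).+1 * n + z.
    rewrite mulSn; lia.
  by rewrite modnMDl modn_small.
congr rho; rewrite /z; lia.
Qed.

Lemma cr_phi n i r (a b c d : 'I_n) :
  cr (phi i r a) (phi i r b) (phi i r c) (phi i r d) = cr a b c d.
Proof. by rewrite /phi cr_rho ?phi_lt // cr_shift cr_rot. Qed.

Lemma imset2 (T U : finType) (f : T -> U) a b : f @: [set a; b] = [set f a; f b].
Proof. by rewrite imsetU1 imset_set1. Qed.

Lemma cross_phi n i r (a b c d : 'I_n) :
  crossing (phi i r @: [set a; b]) (phi i r @: [set c; d]) = crossing [set a; b] [set c; d].
Proof. by rewrite !imset2 !crossingE cr_phi. Qed.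

Lemma crossR p i y1 y2 y3 y4 : y1 < p.+1 -> y2 < p.+1 -> y3 < p.+1 -> y4 < p.+1 ->
  crossing [set rho p i y1; rho p i y2] [set rho p i y3; rho p i y4] = cr y1 y2 y3 y4.
Proof. by move=> *; rewrite crossingE cr_rho. Qed.

Lemma m_card n (S : {set {set 'I_n}}) e : is_matching S -> e \in S -> #|e| == 2.
Proof. by case/and3P => /forall_inP H _ _ /H. Qed.

Lemma cons_nc n i j (E : {set 'I_n.+4}) : j.+1 < n.+4 -> #|E| == 2 ->
  crossing [set rho n.+3 i j; rho n.+3 i j.+1] E = false /\
  crossing E [set rho n.+3 i j; rho n.+3 i j.+1] = false.
Proof.
move=> hj /cards2P [x [y [_ ->]]].
case: (rho_onto i x) => y1 h1 ->; case: (rho_onto i y) => y2 h2 ->.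
rewrite !crossR //; try lia.
all: try (rewrite cr_s3; split; rewrite /cr /PP; lia).
Qed.

Lemma K1_nc n i r (a b : 'I_n) :
  crossing [set rho n.+3 i 0; rho n.+3 i 3] [set phi i r a; phi i r b] = false /\
  crossing [set phi i r a; phi i r b] [set rho n.+3 i 0; rho n.+3 i 3] = false.
Proof.
rewrite /phi !crossR ?phi_lt //; try lia.
all: try (rewrite cr_s3; have := phi_lt r a; have := phi_lt r b;
split; rewrite /cr /PP; lia).
Qed.

Definition Fm n i r (M' : {set {set 'I_n}}) : {set {set 'I_n.+4}} :=
  [set (@phi n i r) @: e | e : {set 'I_n} in M'] :|:
  [set [set rho n.+3 i 0; rho n.+3 i 1]; [set rho n.+3 i 2; rho n.+3 i 3]].

Lemma FmE n i r (M' : {set {set 'I_n}}) E : E \in Fm i r M' ->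
  [\/ E = [set rho n.+3 i 0; rho n.+3 i 1], E = [set rho n.+3 i 2; rho n.+3 i 3] |
      exists2 e, e \in M' & E = phi i r @: e].
Proof.
rewrite /Fm in_setU => /orP [/imsetP [e he ->]|]; last rewrite !inE => /orP [] /eqP ->.
- by constructor 3; exists e.
- by constructor 1.
- by constructor 2.
Qed.

Lemma FmA1 n i r (M' : {set {set 'I_n}}) : [set rho n.+3 i 0; rho n.+3 i 1] \in Fm i r M'.
Proof. by rewrite /Fm !inE eqxx orbT. Qed.
Lemma FmA2 n i r (M' : {set {set 'I_n}}) : [set rho n.+3 i 2; rho n.+3 i 3] \in Fm i r M'.
Proof. by rewrite /Fm !inE eqxx !orbT. Qed.
Lemma FmP n i r (M' : {set {set 'I_n}}) e : e \in M' -> phi i r @: e \in Fm i r M'.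
Proof. by move=> he; rewrite /Fm inE imset_f. Qed.

Lemma notin_phi n i r j (e : {set 'I_n}) : j < 4 -> rho n.+3 i j \in phi i r @: e -> False.
Proof. by move=> hj /imsetP [a _ /eqP]; rewrite rho_phi. Qed.

Lemma Fm_inj n i r : injective (@Fm n i r).
Proof.
have H : forall M1 M2 : {set {set 'I_n}}, Fm i r M1 = Fm i r M2 -> forall e, e \in M1 -> e \in M2.
  move=> M1 M2 E e he; have := FmP i r he; rewrite E => /FmE [] h.
  - have hh : rho n.+3 i 0 \in phi i r @: e by rewrite h !inE eqxx.
    by case: (@notin_phi n i r 0 e isT hh).
  - have hh : rho n.+3 i 2 \in phi i r @: e by rewrite h !inE eqxx.
    by case: (@notin_phi n i r 2 e isT hh).
  - case: h => e' he' h'.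
    by have -> : e = e' by apply: (imset_inj (@phi_inj n i r)).
move=> M1 M2 E; apply/setP => e; apply/idP/idP; [exact: H | exact: H].
Qed.

Lemma rho_mem2 p i j y1 y2 : j < p.+1 -> y1 < p.+1 -> y2 < p.+1 ->
  (rho p i j \in [set rho p i y1; rho p i y2]) = (j == y1) || (j == y2).
Proof. by move=> *; rewrite !inE !rho_eq. Qed.

Lemma geo n i (N N' : {set {set 'I_n.+4}}) :
  is_matching N' -> dcompat N N' ->
  [set rho n.+3 i 0; rho n.+3 i 3] \in N -> [set rho n.+3 i 1; rho n.+3 i 2] \in N ->
  [set rho n.+3 i 0; rho n.+3 i 1] \in N' /\ [set rho n.+3 i 2; rho n.+3 i 3] \in N'.
Proof.
move=> hN' hd hK1 hK2.
have bnd : forall j, j < 4 -> j < n.+4 by move=> j; lia.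
have hA1 : [set rho n.+3 i 0; rho n.+3 i 1] \in N'.
  case: (m_ex (rho n.+3 i 1) hN') => E hE hx.
  case: (edge_other (m_card hN' hE) hx) => v hv Ev.
  case: (rho_onto i v) => y hy Ey; subst v.
  move: hv; rewrite rho_eq //.
  case: y hy Ev => [|[|[|[|y]]]] hy Ev hv //.
  - by rewrite setUC -Ev.
  - by move: hE; rewrite Ev => hE; case: (dc_disj hd hK2 hE).
  -
    case: (m_ex (rho n.+3 i 2) hN') => E' hE' hx'.
    case: (edge_other (m_card hN' hE') hx') => w hw Ew.
    case: (rho_onto i w) => z hz Ez; subst w.
    move: hw; rewrite rho_eq // => hw.
    have [hz13|hz13] := boolP ((z == 1) || (z == 3)).
    + have hzE : rho n.+3 i z \in E by rewrite Ev rho_mem2.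
      have hzE' : rho n.+3 i z \in E' by rewrite Ew !inE eqxx orbT.
      have := m_uniq hN' hE hE' hzE hzE' => EE.
      by move: hx'; rewrite -EE Ev rho_mem2.
    + have := m_nc hN' hE hE'; rewrite Ev Ew crossR //.
      move: hz13 hw hz; case: z {hx' Ew hE'} => [|z] h13 hw hz.
      * by rewrite cr_s2 cr_s3 crQ.
      * rewrite crQ //; lia.
  - have := dc_nc hd hK1 hE; rewrite Ev crossR //; try lia.
split => //.
case: (m_ex (rho n.+3 i 2) hN') => E hE hx.
case: (edge_other (m_card hN' hE) hx) => v hv Ev.
case: (rho_onto i v) => y hy Ey; subst v.
move: hv; rewrite rho_eq //.
case: y hy Ev => [|[|[|[|y]]]] hy Ev hv //.
- have h0E : rho n.+3 i 0 \in E by rewrite Ev !inE eqxx orbT.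
  have h0A : rho n.+3 i 0 \in [set rho n.+3 i 0; rho n.+3 i 1] by rewrite !inE eqxx.
  have := m_uniq hN' hE hA1 h0E h0A => EE.
  by move: hx; rewrite EE rho_mem2.
- by move: hE; rewrite Ev setUC => hE; case: (dc_disj hd hK2 hE).
- by rewrite -Ev.
- have := dc_nc hd hK1 hE; rewrite Ev crossR //; try lia.
Qed.

Lemma K_of n i (N : {set {set 'I_n.+4}}) E j :
  is_matching N -> [set rho n.+3 i 0; rho n.+3 i 3] \in N -> [set rho n.+3 i 1; rho n.+3 i 2] \in N ->
  E \in N -> j < 4 -> rho n.+3 i j \in E ->
  E = [set rho n.+3 i 0; rho n.+3 i 3] \/ E = [set rho n.+3 i 1; rho n.+3 i 2].
Proof.
move=> hN hK1 hK2 hE hj hx.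
case: j hj hx => [|[|[|[|j]]]] // _ hx.
- by left; apply: (m_uniq hN hE hK1 hx); rewrite !inE eqxx.
- by right; apply: (m_uniq hN hE hK2 hx); rewrite !inE eqxx.
- by right; apply: (m_uniq hN hE hK2 hx); rewrite !inE eqxx orbT.
- by left; apply: (m_uniq hN hE hK1 hx); rewrite !inE eqxx orbT.
Qed.

Lemma A_of n i (N : {set {set 'I_n.+4}}) E j :
  is_matching N -> [set rho n.+3 i 0; rho n.+3 i 1] \in N -> [set rho n.+3 i 2; rho n.+3 i 3] \in N ->
  E \in N -> j < 4 -> rho n.+3 i j \in E ->
  E = [set rho n.+3 i 0; rho n.+3 i 1] \/ E = [set rho n.+3 i 2; rho n.+3 i 3].
Proof.
move=> hN hK1 hK2 hE hj hx.
case: j hj hx => [|[|[|[|j]]]] // _ hx.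
- by left; apply: (m_uniq hN hE hK1 hx); rewrite !inE eqxx.
- by left; apply: (m_uniq hN hE hK1 hx); rewrite !inE eqxx orbT.
- by right; apply: (m_uniq hN hE hK2 hx); rewrite !inE eqxx.
- by right; apply: (m_uniq hN hE hK2 hx); rewrite !inE eqxx orbT.
Qed.

Lemma NK n i r (n0 : 0 < n) (M : {set {set 'I_n}}) (N : {set {set 'I_n.+4}}) E :
  is_matching N -> [set rho n.+3 i 0; rho n.+3 i 3] \in N -> [set rho n.+3 i 1; rho n.+3 i 2] \in N ->
  (forall a b : 'I_n, ([set a; b] \in M) = ([set phi i r a; phi i r b] \in N)) ->
  E \in N ->
  [\/ E = [set rho n.+3 i 0; rho n.+3 i 3], E = [set rho n.+3 i 1; rho n.+3 i 2] |
     exists a b, E = [set phi i r a; phi i r b] /\ [set a; b] \in M].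
Proof.
move=> hN hK1 hK2 hrem hE.
case: (m_size hN hE) => x [y [_ Exy]].
have hx : x \in E by rewrite Exy !inE eqxx.
have hy : y \in E by rewrite Exy !inE eqxx orbT.
case: (pt_cases i r n0 x) => [[j hj Ex]|[a Ea]].
  by subst x; case: (K_of hN hK1 hK2 hE hj hx) => ->; [constructor 1|constructor 2].
case: (pt_cases i r n0 y) => [[j hj Ey]|[b Eb]].
  by subst y; case: (K_of hN hK1 hK2 hE hj hy) => ->; [constructor 1|constructor 2].
constructor 3; exists a, b; subst x y; split => //.
by rewrite hrem -Exy.
Qed.

Lemma dir1 n i r (n0 : 0 < n) (M M' : {set {set 'I_n}}) (N : {set {set 'I_n.+4}}) :
  is_matching M -> is_matching N ->
  [set rho n.+3 i 0; rho n.+3 i 3] \in N -> [set rho n.+3 i 1; rho n.+3 i 2] \in N ->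
  (forall a b : 'I_n, ([set a; b] \in M) = ([set phi i r a; phi i r b] \in N)) ->
  is_matching M' -> dcompat M M' ->
  is_matching (Fm i r M') && dcompat N (Fm i r M').
Proof.
move=> hM hN hK1 hK2 hrem hM' hd.
have bnd : forall j, j < 4 -> j < n.+4 by move=> j; lia.
have sz : forall E, E \in Fm i r M' -> #|E| == 2.
  move=> E /FmE [->|->|[e he ->]].
  - by rewrite cards2 rho_eq.
  - by rewrite cards2 rho_eq.
  - by rewrite card_imset; [exact: m_card hM' he | exact: phi_inj].
have cR : forall E j, E \in Fm i r M' -> j < 4 -> rho n.+3 i j \in E ->
    E = [set rho n.+3 i 0; rho n.+3 i 1] \/ E = [set rho n.+3 i 2; rho n.+3 i 3].
  move=> E j /FmE [->|->|[e _ ->]] hj hx; [by left | by right |].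
  by case: (notin_phi hj hx).
have cP : forall E a, E \in Fm i r M' -> phi i r a \in E ->
    exists2 e, e \in M' & (a \in e) && (E == phi i r @: e).
  move=> E a /FmE [->|->|[e he ->]].
  - by rewrite !inE !(eq_sym (phi _ _ _)) !rho_phi.
  - by rewrite !inE !(eq_sym (phi _ _ _)) !rho_phi.
  - move=> hx; exists e => //; rewrite eqxx andbT.
    by move: hx; rewrite mem_imset //; exact: phi_inj.
have hFm : is_matching (Fm i r M').
  apply: m_mk => //.
  - move=> x; case: (pt_cases i r n0 x) => [[j hj ->]|[a ->]].
    + case: j hj => [|[|[|[|j]]]] // _.
      * by exists [set rho n.+3 i 0; rho n.+3 i 1]; [exact: FmA1 | rewrite !inE eqxx].
      * by exists [set rho n.+3 i 0; rho n.+3 i 1]; [exact: FmA1 | rewrite !inE eqxx orbT].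
      * by exists [set rho n.+3 i 2; rho n.+3 i 3]; [exact: FmA2 | rewrite !inE eqxx].
      * by exists [set rho n.+3 i 2; rho n.+3 i 3]; [exact: FmA2 | rewrite !inE eqxx orbT].
    + case: (m_ex a hM') => e he ha; exists (phi i r @: e); first exact: FmP.
      exact: imset_f.
  - move=> x E F hE hF hxE hxF.
    case: (pt_cases i r n0 x) => [[j hj Ex]|[a Ex]]; subst x.
    + case: (cR E j hE hj hxE) => EE; case: (cR F j hF hj hxF) => FF;
      rewrite EE FF //; move: hxE hxF; rewrite EE FF !rho_mem2 ?bnd //; lia.
    + case: (cP E a hE hxE) => e he /andP [hae /eqP ->].
      case: (cP F a hF hxF) => f hf /andP [haf /eqP ->].
      by rewrite (m_uniq hM' he hf hae haf).
  - move=> E F hE hF.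
    case: (FmE hE) => [->|->|[e he ->]].
    + by case: (@cons_nc n i 0 F isT (sz F hF)).
    + by case: (@cons_nc n i 2 F isT (sz F hF)).
    case: (FmE hF) => [->|->|[f hf ->]].
    + by case: (@cons_nc n i 0 (phi i r @: e) isT (sz _ (FmP i r he))).
    + by case: (@cons_nc n i 2 (phi i r @: e) isT (sz _ (FmP i r he))).
    case: (m_size hM' he) => a [b [_ Ee]]; case: (m_size hM' hf) => c [d [_ Ef]]; subst e f.
    by rewrite cross_phi; apply: (m_nc hM').
rewrite hFm /=; apply: dc_mk.
- move=> E hE hF; case: (FmE hF) => [EA|EA|[e he Ee]].
  + have h0 : rho n.+3 i 0 \in E by rewrite EA !inE eqxx.
    have := m_uniq hN hE hK1 h0 (_ : rho n.+3 i 0 \in _); rewrite !inE eqxx => /(_ isT) EK.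
    have : rho n.+3 i 1 \in E by rewrite EA !inE eqxx orbT.
    by rewrite EK rho_mem2 ?bnd.
  + have h0 : rho n.+3 i 3 \in E by rewrite EA !inE eqxx orbT.
    have := m_uniq hN hE hK1 h0 (_ : rho n.+3 i 3 \in _); rewrite !inE eqxx orbT => /(_ isT) EK.
    have : rho n.+3 i 2 \in E by rewrite EA !inE eqxx.
    by rewrite EK rho_mem2 ?bnd.
  + case: (m_size hM' he) => a [b [_ Eab]]; subst e.
    move: hE; rewrite Ee imset2 -hrem => hab.
    exact: (dc_disj hd hab he).
- move=> E F hE hF.
  have cE := m_card hN hE.
  case: (NK n0 hN hK1 hK2 hrem hE) => [EK|EK|[a [b [EK hab]]]]; rewrite EK; rewrite EK in cE.
  + case: (FmE hF) => [->|->|[f hf ->]].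
    * by case: (@cons_nc n i 0 _ isT cE).
    * by case: (@cons_nc n i 2 _ isT cE).
    * case: (m_size hM' hf) => c [d [_ Ef]]; subst f.
      by rewrite imset2; case: (K1_nc i r c d).
  + by case: (@cons_nc n i 1 _ isT (sz F hF)).
  + case: (FmE hF) => [->|->|[f hf ->]].
    * by case: (@cons_nc n i 0 _ isT cE).
    * by case: (@cons_nc n i 2 _ isT cE).
    * case: (m_size hM' hf) => c [d [_ Ef]]; subst f.
      rewrite -imset2 cross_phi; exact: (dc_nc hd hab hf).
Qed.

Lemma dir2 n i r (n0 : 0 < n) (M : {set {set 'I_n}}) (N N' : {set {set 'I_n.+4}}) :
  is_matching M -> is_matching N ->
  [set rho n.+3 i 0; rho n.+3 i 3] \in N -> [set rho n.+3 i 1; rho n.+3 i 2] \in N ->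
  (forall a b : 'I_n, ([set a; b] \in M) = ([set phi i r a; phi i r b] \in N)) ->
  is_matching N' -> dcompat N N' ->
  exists2 M', is_matching M' && dcompat M M' & N' = Fm i r M'.
Proof.
move=> hM hN hK1 hK2 hrem hN' hd.
have bnd : forall j, j < 4 -> j < n.+4 by move=> j; lia.
case: (geo hN' hd hK1 hK2) => hA1 hA2.
set M' : {set {set 'I_n}} := [set e : {set 'I_n} | (@phi n i r) @: e \in N'].
have inM' : forall e, (e \in M') = (phi i r @: e \in N') by move=> e; rewrite inE.
have c2 : forall E, E \in N' ->
    [\/ E = [set rho n.+3 i 0; rho n.+3 i 1], E = [set rho n.+3 i 2; rho n.+3 i 3] |
        exists e : {set 'I_n}, E = phi i r @: e].
  move=> E hE; case: (m_size hN' hE) => x [y [_ Exy]].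
  have hx : x \in E by rewrite Exy !inE eqxx.
  have hy : y \in E by rewrite Exy !inE eqxx orbT.
  case: (pt_cases i r n0 x) => [[j hj Ex]|[a Ea]].
    by subst x; case: (A_of hN' hA1 hA2 hE hj hx) => ->; [constructor 1|constructor 2].
  case: (pt_cases i r n0 y) => [[j hj Ey]|[b Eb]].
    by subst y; case: (A_of hN' hA1 hA2 hE hj hy) => ->; [constructor 1|constructor 2].
  by constructor 3; exists [set a; b]; rewrite imset2 Exy Ea Eb.
have EN : N' = Fm i r M'.
  apply/setP => E; apply/idP/idP => hE.
  - case: (c2 E hE) => [->|->|[e Ee]]; [exact: FmA1 | exact: FmA2 |].
    by rewrite Ee; apply: FmP; rewrite inM' -Ee.
  - by case: (FmE hE) => [->|->|[e he ->]] //; rewrite -inM'.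
have szM' : forall e, e \in M' -> #|e| == 2.
  move=> e; rewrite inM' => /(m_card hN').
  by rewrite card_imset //; exact: phi_inj.
have hM' : is_matching M'.
  apply: m_mk => //.
  - move=> a; case: (m_ex (phi i r a) hN') => E hE hx.
    case: (c2 E hE) => [EA|EA|[e Ee]].
    + by move: hx; rewrite EA !inE !(eq_sym (phi _ _ _)) !rho_phi.
    + by move: hx; rewrite EA !inE !(eq_sym (phi _ _ _)) !rho_phi.
    + exists e; first by rewrite inM' -Ee.
      by move: hx; rewrite Ee mem_imset //; exact: phi_inj.
  - move=> a e f; rewrite !inM' => he hf hae haf.
    apply: (imset_inj (@phi_inj n i r)).
    by apply: (m_uniq (x := phi i r a) hN' he hf); apply: imset_f.
  - move=> e f he hf.
    case/cards2P: (szM' e he) => a [b [_ Ee]]; case/cards2P: (szM' f hf) => c [d [_ Ef]].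
    subst e f; rewrite -(cross_phi i r); apply: (m_nc hN'); by rewrite -inM'.
exists M' => //; rewrite hM' /=; apply: dc_mk.
- move=> e he he'.
  case: (m_size hM he) => a [b [_ Ee]]; subst e.
  move: he he'; rewrite inM' hrem imset2; exact: dc_disj.
- move=> e f he hf.
  case: (m_size hM he) => a [b [_ Ee]]; case/cards2P: (szM' f hf) => c [d [_ Ef]].
  subst e f; rewrite -(cross_phi i r); apply: (dc_nc hd); last by rewrite -inM'.
  by rewrite imset2 -hrem.
Qed.

Lemma main_gen n i r (n0 : 0 < n) (M : {set {set 'I_n}}) (N : {set {set 'I_n.+4}}) :
  is_matching M -> is_matching N ->
  [set rho n.+3 i 0; rho n.+3 i 3] \in N -> [set rho n.+3 i 1; rho n.+3 i 2] \in N ->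
  (forall a b : 'I_n, ([set a; b] \in M) = ([set phi i r a; phi i r b] \in N)) ->
  degree N = degree M.
Proof.
move=> hM hN hK1 hK2 hrem.
rewrite /degree.
have -> : [set N' : {set {set 'I_n.+4}} | is_matching N' && dcompat N N'] =
  (@Fm n i r) @: [set M' : {set {set 'I_n}} | is_matching M' && dcompat M M'];
  last by rewrite card_imset //; exact: Fm_inj.
apply/setP => N'; rewrite inE; apply/idP/idP.
- case/andP => h1 h2; case: (dir2 n0 hM hN hK1 hK2 hrem h1 h2) => M' hM' ->.
  by apply: imset_f; rewrite inE.
- case/imsetP => M' ; rewrite inE => /andP [h1 h2] ->.
  exact: (dir1 n0 hM hN hK1 hK2 hrem h1 h2).
Qed.

Theorem mainTheorem8 (k : nat) (hk : 1 <= k)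
    (M : {set {set 'I_(k.*2)}}) (N : {set {set 'I_(k.*2).+4}}) :
  is_matching M -> is_matching N ->
  (exists i : nat, has_block_at N i /\ exists r : nat, removal_is_rot N M i r) ->
  degree N = degree M.
Proof.
move=> hM hN [i [/andP [hK1 hK2] [r hrem]]].
have n0 : 0 < k.*2 by rewrite double_gt0.
apply: (main_gen (i := i) (r := r) n0 hM hN).
- by rewrite /rho addn0.
- by [].
- by move=> a b; rewrite /phi /rho !addnA; exact: hrem.
Qed.
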